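(* Let $\Pi$ be a non-negative projector on $\mathcal{Q}^n$ and suppose $\Pi|\psi\rangle=|\psi\rangle$ for some non-negative state $|\psi\rangle$. Then for any $x\in\mathcal{S}(\psi)$: (1) $\langle x|\Pi|x\rangle>0$; (2) if $\langle x|\Pi|y\rangle>0$ for some $y\in\{0,1\}^n$, then $y\in\mathcal{S}(\psi)$ and $$\frac{\langle y|\psi\rangle}{\langle x|\psi\rangle}=\sqrt{\frac{\langle y|\Pi|y\rangle}{\langle x|\Pi|x\rangle}}.$$
   Context: $\mathcal{Q}^n=(\mathbb{C}^2)^{\otimes n}$ with standard basis $\{|x\rangle\}$, $x\in\{0,1\}^n$. A non-negative projector is a Hermitian projector whose standard-basis matrix has real non-negative entries. A non-negative state is a normalized vector with real non-negative amplitudes in the standard basis. For such a state, its support is $\mathcal{S}(\psi)=\{x\in\{0,1\}^n:\langle x|\psi\rangle>0\}$. *)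

(* Defs.v *)
(* The Hilbert space Q^n = (C^2)^{(x)n} is modelled by
   column vectors 'cV[C]_(2^n); the standard basis vector |x>, x in {0,1}^n,
   is indexed by the ordinal 'I_(2^n) whose binary expansion is x.
   C is any numClosedFieldType (e.g. algC); in such a field  0 <= z  means
   z is real and non-negative. *)
From mathcomp Require Import all_boot all_order all_algebra.
Set Implicit Arguments. Unset Strict Implicit. Unset Printing Implicit Defensive.
Import Order.TTheory GRing.Theory Num.Theory.
Local Open Scope ring_scope.

Notation basis n := ('I_(2 ^ n)).

Definition adjmx (C : numClosedFieldType) (m : nat) (A : 'M[C]_m) : 'M[C]_m :=
  map_mx Num.conj A^T.

Definition nonneg_projector (C : numClosedFieldType) (n : nat)
    (P : 'M[C]_(2 ^ n)) : Prop :=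
  [/\ adjmx P = P, P *m P = P & forall x y : basis n, 0 <= P x y].

Definition nonneg_state (C : numClosedFieldType) (n : nat)
    (psi : 'cV[C]_(2 ^ n)) : Prop :=
  (forall x : basis n, 0 <= psi x 0) /\
  \sum_(x < 2 ^ n) `|psi x 0| ^+ 2 = 1.

Definition support_state (C : numClosedFieldType) (n : nat)
    (psi : 'cV[C]_(2 ^ n)) : pred (basis n) :=
  fun x => 0 < psi x 0.

(* Main.v *)
Require Import Defs.
From mathcomp Require Import all_boot all_order all_algebra.
From mathcomp Require Import ring.
Import Order.TTheory GRing.Theory Num.Theory.
Local Open Scope ring_scope.

Section Aux.
Variables (C : numClosedFieldType) (m : nat) (P : 'M[C]_m).
Hypothesis Psym : forall i j, P i j = P j i.
Hypothesis Pid : P *m P = P.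
Hypothesis Pnn : forall i j, 0 <= P i j.

Lemma PtP : P^T = P.
Proof. by apply/matrixP => i j; rewrite mxE Psym. Qed.

Lemma gram (c : 'cV[C]_m) :
  ((P *m c)^T *m (P *m c)) = c^T *m (P *m c).
Proof. by rewrite trmx_mul PtP -mulmxA (mulmxA P P) Pid. Qed.

Lemma dot00 (u w : 'cV[C]_m) : (u^T *m w) 0 0 = \sum_k u k 0 * w k 0.
Proof. by rewrite mxE; apply: eq_bigr => k _; rewrite mxE. Qed.

Lemma lemA (v : 'cV[C]_m) : P *m v = v ->
  P *m map_mx (fun z => `|z|) v = map_mx (fun z => `|z|) v.
Proof.
move=> Pv; set a := map_mx _ v; set b := P *m a.
have hle : forall z, a z 0 <= b z 0.
  move=> z; rewrite /a /b !mxE -{1}Pv mxE.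
  apply: le_trans (ler_norm_sum _ _ _) _.
  by apply: ler_sum => k _; rewrite normrM ger0_norm // mxE.
have ha : forall z, 0 <= a z 0 by move=> z; rewrite mxE.
have hs : \sum_z b z 0 * (b z 0 - a z 0) = 0.
  have := congr1 (fun M : 'M[C]_1 => M 0 0) (gram a); rewrite /= -/b !dot00 => e.
  have -> : \sum_z b z 0 * (b z 0 - a z 0) =
            \sum_z b z 0 * b z 0 - \sum_z a z 0 * b z 0.
    rewrite -sumrB; apply: eq_bigr => z _; ring.
  by rewrite e subrr.
apply/matrixP => z j; rewrite (ord1 j).
have t0 : forall z, 0 <= b z 0 * (b z 0 - a z 0).
  move=> w; apply: mulr_ge0; first exact: le_trans (ha w) (hle w).
  by rewrite subr_ge0.
have /eqP := @psumr_eq0P _ _ predT _ (fun i _ => t0 i) hs z isT.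
rewrite mulf_eq0 subr_eq0 => /orP [/eqP b0|/eqP //].
by apply/eqP; rewrite eq_le (hle z) b0 (ha z).
Qed.
End Aux.

Theorem lemma4p4 (C : numClosedFieldType) (n : nat)
    (P : 'M[C]_(2 ^ n)) (psi : 'cV[C]_(2 ^ n)) :
  nonneg_projector P -> nonneg_state psi -> P *m psi = psi ->
  forall x : 'I_(2 ^ n), x \in support_state psi ->
    0 < P x x /\
    (forall y : 'I_(2 ^ n), 0 < P x y ->
       y \in support_state psi /\
       psi y 0 / psi x 0 = sqrtC (P y y / P x x)).
Proof.
move=> [Hadj Pid Pnn] [psinn _] Ppsi x hx.
have hx' : 0 < psi x 0 := hx.
have Psym : forall i j, P i j = P j i.
  move=> i j; rewrite -{1}Hadj /adjmx !mxE geC0_conj //.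
have Pnz : forall i j, P i j != 0 -> 0 < P i j.
  by move=> i j h; rewrite lt_def h Pnn.
have psiE : forall z, psi z 0 = \sum_k P z k * psi k 0.
  by move=> z; rewrite -{1}Ppsi mxE.
have colv : forall (w : 'cV[C]_(2 ^ n)) (r : 'I_(2 ^ n)),
    (w^T *m (delta_mx r 0 : 'cV[C]_(2 ^ n))) 0 0 = w r 0.
  by move=> w r; rewrite -colE /col !mxE.
split.
  apply: Pnz; apply/negP => /eqP h0.
  have h1 : \sum_j P x j * P x j = 0.
    transitivity (P x x); last exact: h0; rewrite -[in RHS]Pid mxE; apply: eq_bigr => j _; by rewrite (Psym j x).
  have h2 : forall j, P x j = 0.
    move=> j; have /eqP := @psumr_eq0P _ _ predT _
      (fun i _ => mulr_ge0 (Pnn x i) (Pnn x i)) h1 j isT.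
    by rewrite mulf_eq0 orbb => /eqP.
  move: hx'; rewrite psiE big1 ?ltxx // => j _; by rewrite h2 mul0r.
move=> y hxy.
have [c cdef] : {c : 'cV[C]_(2 ^ n) | c = P x y *: delta_mx y 0 - P y y *: delta_mx x 0} by eexists.
have [v vdef] : {v : 'cV[C]_(2 ^ n) | v = P *m c} by eexists.
have Pv : P *m v = v by rewrite vdef mulmxA Pid.
have hvE : forall z, v z 0 = P x y * P z y - P y y * P z x.
  by move=> z; rewrite vdef cdef mulmxBr -!scalemxAr -!colE !mxE.
have A := @lemA C _ P Psym Pid Pnn v Pv.
have ay : \sum_k P y k * `|v k 0| = 0.
  transitivity ((P *m map_mx (fun z => `|z|) v) y 0).
    by rewrite mxE; apply: eq_bigr => k _; rewrite mxE.
  by rewrite A mxE hvE (Psym y x) mulrC subrr normr0.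
have vx : v x 0 = 0.
  have /eqP := @psumr_eq0P _ _ predT _
      (fun i _ => mulr_ge0 (Pnn y i) (normr_ge0 (v i 0))) ay x isT.
  rewrite mulf_eq0 normr_eq0 (Psym y x) (gt_eqF hxy) /= => /eqP //.
have e1 : P x y * P x y = P y y * P x x.
  by apply/eqP; rewrite -subr_eq0 -hvE vx.
have vy : v y 0 = 0 by rewrite hvE (Psym y x) mulrC subrr.
have cv : (c^T *m v) 0 0 = 0.
  have -> : c^T *m v = (v^T *m c)^T by rewrite trmx_mul trmxK.
  rewrite mxE cdef mulmxBr -!scalemxAr -!colE !mxE vx vy; by rewrite !mulr0 subrr.
have hv0 : forall k, v k 0 = 0.
  have hs : \sum_k v k 0 * v k 0 = 0.
    by rewrite -dot00 -cv vdef (@gram C _ P Psym Pid).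
  have vr : forall k, v k 0 \is Num.real.
    move=> k; rewrite hvE; apply: rpredB; apply: rpredM; exact: ger0_real.
  have vge : forall k, 0 <= v k 0 * v k 0.
    by move=> k; rewrite -expr2 -real_normK ?vr // exprn_ge0.
  move=> k; have /eqP := @psumr_eq0P _ _ predT _ (fun i _ => vge i) hs k isT.
  by rewrite mulf_eq0 orbb => /eqP.
have e2 : P x y * psi y 0 = P y y * psi x 0.
  have h : (psi^T *m c) 0 0 = 0.
    have -> : psi^T *m c = psi^T *m v.
      by rewrite vdef mulmxA -{1}Ppsi trmx_mul (@PtP C _ P Psym).
    by rewrite dot00 big1 // => k _; rewrite hv0 mulr0.
  move: h; rewrite cdef mulmxBr -!scalemxAr -!colE !mxE => /eqP.
  by rewrite subr_eq0 => /eqP.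
have Pxx : 0 < P x x.
  by apply: Pnz; apply/eqP => h; move: e1; rewrite h mulr0 => /eqP;
     rewrite mulf_eq0 orbb (gt_eqF hxy).
have Pyy : 0 < P y y.
  by apply: Pnz; apply/eqP => h; move: e1; rewrite h mul0r => /eqP;
     rewrite mulf_eq0 orbb (gt_eqF hxy).
have psiy : psi y 0 = P y y * psi x 0 / P x y.
  by rewrite -e2 mulrC mulKf // gt_eqF.
split.
  change (0 < psi y 0); rewrite psiy; apply: divr_gt0 => //; exact: mulr_gt0.
have -> : P y y / P x x = (P y y / P x y) ^+ 2.
  have hxx : P x x = P x y * P x y / P y y by rewrite e1; field; rewrite gt_eqF.
  rewrite hxx; field; rewrite !gt_eqF //.
rewrite sqrCK; last by apply: divr_ge0; exact: Pnn.
rewrite psiy; field; rewrite !gt_eqF //.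
Qed.
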